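(* Let $N\geq 2$ be an integer and consider $2N+1$ qubits $a_1,\dots,a_{2N+1}$. Define the $(2N+1)$-qubit graph state $$|h_{2N+1}\rangle = CZ_{(1,2)}\,CZ_{(1,N+2)}\prod_{k=3}^{N+1}\Big[CZ_{(2,k)}\,CZ_{(k,N+2)}\,CZ_{(k,k+N)}\Big]\,|+\rangle^{\otimes(2N+1)},$$ equivalently $$|h_{2N+1}\rangle=\frac{1}{2^N\sqrt{2}}\sum_{q_1,\dots,q_{2N+1}\in\{0,1\}}(-1)^{f(q_1,\dots,q_{2N+1})}|q_1,q_2,\dots,q_{2N+1}\rangle,$$ where $f(q)=q_1q_2\oplus q_1q_{N+2}\oplus\bigoplus_{k=3}^{N+1}\big(q_2q_k\oplus q_kq_{N+2}\oplus q_kq_{k+N}\big)$ (with $\oplus$ addition mod 2). Then the geometric measure of entanglement of $|h_{2N+1}\rangle$ equals $N$, i.e. $G(|h_{2N+1}\rangle\langle h_{2N+1}|)=N$.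
   Context: $|+\rangle=(|0\rangle+|1\rangle)/\sqrt2$. $CZ_{(j_1,j_2)}$ denotes the two-qubit controlled-$Z$ gate $\mathrm{diag}(1,1,1,-1)$ acting on qubits $a_{j_1},a_{j_2}$ (identity elsewhere). For a pure state $\rho$ on $(\mathbb{C}^2)^{\otimes(2N+1)}$, $\Lambda^2(\rho)=\max_{|\varphi\rangle}\langle\varphi|\rho|\varphi\rangle$, where the maximum is over fully product pure states $|\varphi\rangle=|\varphi_1\rangle\otimes\cdots\otimes|\varphi_{2N+1}\rangle$, and the geometric measure of entanglement is $G(\rho)=-2\log_2\Lambda(\rho)$. *)

(* Defs.v *)
From mathcomp Require Import all_boot all_algebra.
From mathcomp Require Import classical_sets reals exp complex.
Set Implicit Arguments. Unset Strict Implicit. Unset Printing Implicit Defensive.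
Import GRing.Theory Num.Theory.
Local Open Scope ring_scope.

Section QState.
Variable R : realType.

Definition basis (n : nat) := {ffun 'I_n -> bool}.

Definition qvec (n : nat) := basis n -> R[i].
Definition qop (n : nat) := basis n -> basis n -> R[i].

Definition proj (n : nat) (psi : qvec n) : qop n :=
  fun q q' => psi q * (psi q')^*.

Definition qubit_state (ab : R[i] * R[i]) : Prop :=
  `|ab.1| ^+ 2 + `|ab.2| ^+ 2 = 1.

Definition prod_vec (n : nat) (phi : 'I_n -> R[i] * R[i]) : qvec n :=
  fun q => \prod_(i < n) (if q i then (phi i).2 else (phi i).1).

Definition expect (n : nat) (rho : qop n) (phi : qvec n) : R[i] :=
  \sum_(q : basis n) \sum_(q' : basis n) (phi q)^* * rho q q' * phi q'.

(* Lambda^2(rho) = max over fully product pure states of <phi|rho|phi>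
   (the maximum is attained by compactness, so it is the supremum; the
   value <phi|rho|phi> is real for rho = |psi><psi|, we take its real part) *)
Definition Lambda2 (n : nat) (rho : qop n) : R :=
  sup [set x : R | exists phi : 'I_n -> R[i] * R[i],
         (forall i, qubit_state (phi i)) /\ x = complex.Re (expect rho (prod_vec phi))].

Definition log2 (x : R) : R := ln x / ln 2.

Definition GME (n : nat) (rho : qop n) : R :=
  - 2 * log2 (Num.sqrt (Lambda2 rho)).

(* 1-based qubit labels: qubit a_j is index j-1 of 'I_(2N+1) *)
Definition qb (N : nat) (q : basis (N.*2).+1) (j : nat) : bool :=
  q (inord j.-1).

Definition f_h (N : nat) (q : basis (N.*2).+1) : bool :=
  (qb q 1 && qb q 2) (+) (qb q 1 && qb q N.+2) (+)
  \big[addb/false]_(3 <= k < N.+2)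
     ((qb q 2 && qb q k) (+) (qb q k && qb q N.+2) (+) (qb q k && qb q (k + N))).

Definition h_state (N : nat) : qvec (N.*2).+1 :=
  fun q => Complex ((2 ^+ N * Num.sqrt (2 : R))^-1) 0 * (-1) ^+ (f_h q : nat).

End QState.

(* Main.v *)
Require Import Defs.
From mathcomp Require Import all_boot all_algebra.
From mathcomp Require Import classical_sets reals exp complex.
From mathcomp Require Import zify ring lra.
Import GRing.Theory Num.Theory.
Local Open Scope ring_scope.


Section Idx.
Variable m : nat.
Local Notation n := ((m.+2).*2).+1.
Local Notation M := m.+1.

Definition Ef (p : bool * bool * bool) (g : {ffun 'I_M -> bool * bool}) (k : nat) : bool :=
  if k == 0%N then p.1.1 else if k == 1%N then p.1.2
  else if (k < m.+3)%N then (g (inord (k - 2))).1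
  else if k == m.+3 then p.2 else (g (inord (k - m.+4))).2.

Definition ef (pg : (bool * bool * bool) * {ffun 'I_M -> bool * bool}) : basis n :=
  [ffun i : 'I_n => Ef pg.1 pg.2 i].

Lemma efE pg k : (k < n)%N -> ef pg (inord k) = Ef pg.1 pg.2 k.
Proof. by move=> hk; rewrite ffunE inordK. Qed.

Lemma Ef_k p g (j : 'I_M) : Ef p g (j + 2) = (g j).1.
Proof.
rewrite /Ef; have hj := ltn_ord j.
have -> : (j + 2 == 0)%N = false by lia.
have -> : (j + 2 == 1)%N = false by lia.
have -> : (j + 2 < m.+3)%N = true by lia.
by rewrite addnK inord_val.
Qed.

Lemma Ef_l p g (j : 'I_M) : Ef p g (j + m.+4) = (g j).2.
Proof.
rewrite /Ef; have hj := ltn_ord j.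
have -> : (j + m.+4 == 0)%N = false by lia.
have -> : (j + m.+4 == 1)%N = false by lia.
have -> : (j + m.+4 < m.+3)%N = false by lia.
have -> : (j + m.+4 == m.+3)%N = false by lia.
by rewrite addnK inord_val.
Qed.

Lemma ef_inj : injective ef.
Proof.
move=> [[[a1 a2] a3] g] [[[b1 b2] b3] h] E.
have E' k : (k < n)%N -> Ef ((a1,a2),a3) g k = Ef ((b1,b2),b3) h k.
  by move=> hk; have := congr1 (fun q : basis n => q (inord k)) E; rewrite /= !efE.
have e1 : a1 = b1 by have := E' 0%N; rewrite /Ef /=; apply; lia.
have e2 : a2 = b2 by have := E' 1%N; rewrite /Ef /=; apply; lia.
have e3 : a3 = b3.
  have := E' m.+3; rewrite /Ef /= ltnn eqxx; apply; lia.
have -> : g = h.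
  apply/ffunP => j; have hj := ltn_ord j.
  have := E' (j + 2)%N; have := E' (j + m.+4)%N; rewrite !Ef_k !Ef_l.
  case: (g j) => [u v]; case: (h j) => [u' v'] /= H1 H2.
  by rewrite H1 ?H2 //; lia.
by rewrite e1 e2 e3.
Qed.

Lemma ef_bij : bijective ef.
Proof.
apply: inj_card_bij ef_inj _.
rewrite /basis !card_prod !card_ffun !card_prod !card_bool !card_ord.
rewrite expnMn -expnD.
have -> : (2 * 2 * 2 = 2 ^ 3)%N by [].
rewrite -expnD leq_exp2l //; lia.
Qed.

Lemma shift_big (C : comNzRingType) a b (F : nat -> C) :
  \prod_(a <= k < a + b) F k = \prod_(j < b) F (j + a)%N.
Proof. by rewrite -{1}[a]add0n big_addn addKn big_mkord. Qed.

Variable C : comNzRingType.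
Variable w : 'I_n -> bool -> C.
Local Notation W k b := (w (inord k) b).

Lemma prod_ef p g :
  \prod_(i < n) w i (ef (p, g) i) =
  W 0 p.1.1 * W 1 p.1.2 * W m.+3 p.2 *
  \prod_(j < M) (W (j + 2) (g j).1 * W (j + m.+4) (g j).2).
Proof.
rewrite (eq_bigr (fun i : 'I_n => W i (Ef p g i))); last first.
  by move=> i _; rewrite ffunE inord_val.
rewrite -(big_mkord xpredT (fun k => W k (Ef p g k))).
rewrite big_ltn // big_ltn; last lia.
rewrite (big_cat_nat _ (n:=m.+3)); [|lia|lia].
rewrite (@big_ltn _ _ _ m.+3) /=; last lia.
have P1 : \prod_(2 <= i < m.+3) W i (Ef p g i) = \prod_(j < M) W (j + 2) (g j).1.
  by rewrite (_ : m.+3 = 2 + M)%N // shift_big; apply: eq_bigr => j _; rewrite Ef_k.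
have P2 : \prod_(m.+4 <= i < n) W i (Ef p g i) = \prod_(j < M) W (j + m.+4) (g j).2.
  rewrite (_ : n = m.+4 + M)%N; last lia.
  by rewrite shift_big; apply: eq_bigr => j _; rewrite Ef_l.
rewrite P1 P2.
rewrite big_split /Ef /=.
rewrite ltnn eqxx.
ring.
Qed.


Local Notation sg b := ((-1 : C) ^+ (b : bool)).

Lemma shift_big' a b (F : nat -> C) :
  \prod_(a <= k < a + b) F k = \prod_(j < b) F (j + a)%N.
Proof. by rewrite -{1}[a]add0n big_addn addKn big_mkord. Qed.

Lemma sg_ef p g :
  sg (f_h (ef (p, g))) =
  sg (p.1.1 && p.1.2) * sg (p.1.1 && p.2) *
  \prod_(j < M) (sg (p.1.2 && (g j).1) * sg ((g j).1 && p.2) * sg ((g j).1 && (g j).2)).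
Proof.
rewrite /f_h /qb !signr_addb.
rewrite (big_morph (fun b : bool => sg b) (@signr_addb C) (erefl _)).
rewrite !efE /=; try lia.
have -> : Ef p g 0 = p.1.1 by [].
have -> : Ef p g 1 = p.1.2 by [].
have -> : Ef p g m.+3 = p.2 by rewrite /Ef /= ltnn eqxx.
rewrite (_ : (m.+2).+2 = 3 + M)%N // shift_big'.
congr (_ * _ * _); apply: eq_bigr => j _; have hj := ltn_ord j.
rewrite !signr_addb !efE; try lia.
rewrite (_ : (j + 3).-1 = j + 2)%N; last lia.
rewrite (_ : (j + 3 + m.+2).-1 = j + m.+4)%N; last lia.
by rewrite Ef_k Ef_l.
Qed.


Definition Hterm (x2 x3 : bool) (j : 'I_M) (uv : bool * bool) : C :=
  W (j + 2) uv.1 * W (j + m.+4) uv.2 * (sg (x2 && uv.1) * sg (uv.1 && x3) * sg (uv.1 && uv.2)).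

Definition Aterm (p : bool * bool * bool) : C :=
  W 0 p.1.1 * W 1 p.1.2 * W m.+3 p.2 * sg (p.1.1 && p.1.2) * sg (p.1.1 && p.2).

Lemma decomp :
  \sum_(q : basis n) (\prod_i w i (q i)) * sg (f_h q) =
  \sum_(x1 : bool) \sum_(x2 : bool) \sum_(x3 : bool)
    Aterm (x1, x2, x3) * \prod_(j < M) \sum_(u : bool) \sum_(v : bool) Hterm x2 x3 j (u, v).
Proof.
rewrite (reindex ef); last exact: onW_bij ef_bij.
rewrite (eq_bigr (fun pg : (bool * bool * bool) * {ffun 'I_M -> bool * bool} => Aterm pg.1 * \prod_(j < M) Hterm pg.1.1.2 pg.1.2 j (pg.2 j))); last first.
  move=> [p g] _; rewrite prod_ef sg_ef /Aterm /Hterm /= !big_split /=.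
  set s1 := (-1) ^+ (p.1.1 && p.1.2); set s2 := (-1) ^+ (p.1.1 && p.2).
  ring.
rewrite -(pair_big xpredT xpredT (fun p (g : {ffun 'I_M -> bool * bool}) => Aterm p * \prod_(j < M) Hterm p.1.2 p.2 j (g j))) /=.
rewrite -(pair_big xpredT xpredT (fun p12 x3 => \sum_(g : {ffun 'I_M -> bool * bool}) Aterm (p12, x3) * \prod_(j < M) Hterm p12.2 x3 j (g j))) /=.
rewrite -(pair_big xpredT xpredT (fun x1 x2 => \sum_x3 \sum_(g : {ffun 'I_M -> bool * bool}) Aterm ((x1, x2), x3) * \prod_(j < M) Hterm x2 x3 j (g j))) /=.
apply: eq_bigr => x1 _; apply: eq_bigr => x2 _; apply: eq_bigr => x3 _.
rewrite -mulr_sumr; congr (_ * _).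
rewrite -(bigA_distr_bigA (fun j uv => Hterm x2 x3 j uv)).
apply: eq_bigr => j _.
by rewrite -(pair_big xpredT xpredT (fun u v => Hterm x2 x3 j (u, v))).
Qed.
End Idx.


Section N2.
Variable R : realType.
Definition n2 (z : R[i]) : R := complex.Re z ^+ 2 + complex.Im z ^+ 2.

Lemma n2M a b : n2 (a * b) = n2 a * n2 b.
Proof. by case: a => a1 a2; case: b => b1 b2; rewrite /n2 /=; ring. Qed.

Lemma n2_ge0 z : 0 <= n2 z.
Proof. by rewrite /n2 addr_ge0 // sqr_ge0. Qed.

Lemma n2_conj z : n2 (z^*) = n2 z.
Proof. by case: z => a b; rewrite /n2 /=; ring. Qed.

Lemma n2N z : n2 (- z) = n2 z.
Proof. by case: z => a b; rewrite /n2 /=; ring. Qed.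

Lemma n2_1 : n2 1 = 1.
Proof. by rewrite /n2 /=; ring. Qed.

Lemma CS2 a b c d : n2 (a * c + b * d) <= (n2 a + n2 b) * (n2 c + n2 d).
Proof.
case: a => a1 a2; case: b => b1 b2; case: c => c1 c2; case: d => d1 d2; rewrite /n2 /=.
set X := a1 * d1 + a2 * d2 - b1 * c1 - b2 * c2.
set Y := a2 * d1 - a1 * d2 - b2 * c1 + b1 * c2.
rewrite -subr_ge0.
have -> : ((a1 ^+ 2 + a2 ^+ 2 + (b1 ^+ 2 + b2 ^+ 2)) * (c1 ^+ 2 + c2 ^+ 2 + (d1 ^+ 2 + d2 ^+ 2)) -
  ((a1 * c1 - a2 * c2 + (b1 * d1 - b2 * d2)) ^+ 2 + (a1 * c2 + a2 * c1 + (b1 * d2 + b2 * d1)) ^+ 2))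
  = X ^+ 2 + Y ^+ 2 by rewrite /X /Y; ring.
by rewrite addr_ge0 // sqr_ge0.
Qed.

Lemma para a b : n2 (a + b) + n2 (a - b) = 2 * (n2 a + n2 b).
Proof. by case: a => a1 a2; case: b => b1 b2; rewrite /n2 /=; ring. Qed.

Lemma n2_prod (I : finType) (F : I -> R[i]) : n2 (\prod_i F i) = \prod_i n2 (F i).
Proof. by rewrite (big_morph n2 n2M n2_1). Qed.

Lemma Re_normsq z : complex.Re (z * z^*) = n2 z.
Proof. by case: z => a b; rewrite /n2 /=; ring. Qed.

Lemma qs_n2 (ab : R[i] * R[i]) : qubit_state ab -> n2 ab.1 + n2 ab.2 = 1.
Proof.
rewrite /qubit_state -!add_Re2_Im2 -rmorphD /= => H.
by have := congr1 (@complex.Re R) H.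
Qed.
End N2.
Arguments n2 {R}.

Lemma n2X (R : realType) (z : R[i]) k : n2 (z ^+ k) = n2 z ^+ k.
Proof. by elim: k => [|k IH]; rewrite ?expr0 ?n2_1 // !exprS n2M IH. Qed.

Lemma n2_dbl (R : realType) (z : R[i]) : n2 (z + z) = 4 * n2 z.
Proof. by case: z => a b; rewrite /n2 /=; ring. Qed.

Lemma gen_id (K : comNzRingType) (a P : K) :
  a * ((1 + 0 * 1) * P) + a * ((1 + 0 * (-1)) * P) = (a + a) * P.
Proof. ring. Qed.

Lemma half2 (R : realType) : (2^-1 + 2^-1 : R) = 1.
Proof. by field. Qed.

Import order.Order.TTheory.


Section Main.
Variable R : realType.
Variable m : nat.
Local Notation n := ((m.+2).*2).+1.
Local Notation M := m.+1.
Local Notation C := (R[i]).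
Variable w : 'I_n -> bool -> C.
Local Notation W k b := (w (inord k) b).
Local Notation sg b := ((-1 : C) ^+ (b : bool)).

Definition Kf (s : C) : C :=
  \prod_(j < M) (W (j + 2) false * (W (j + m.+4) false + W (j + m.+4) true) +
                 W (j + 2) true * (s * (W (j + m.+4) false - W (j + m.+4) true))).
Definition Df (s : C) : C := W 0 false + W 0 true * s.

Lemma Kj (x2 x3 : bool) (j : 'I_M) :
  \sum_(u : bool) \sum_(v : bool) @Hterm m _ w x2 x3 j (u, v) =
  W (j + 2) false * (W (j + m.+4) false + W (j + m.+4) true) +
  W (j + 2) true * ((if x2 (+) x3 then -1 else 1) * (W (j + m.+4) false - W (j + m.+4) true)).
Proof. by rewrite !big_bool /Hterm /=; case: x2; case: x3 => /=; ring. Qed.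

Lemma T_closed :
  \sum_(x1 : bool) \sum_(x2 : bool) \sum_(x3 : bool)
    @Aterm m _ w (x1, x2, x3) * \prod_(j < M) \sum_(u : bool) \sum_(v : bool) @Hterm m _ w x2 x3 j (u, v)
  = (W 1 false * W m.+3 false + W 1 true * W m.+3 true) * (Df 1 * Kf 1) +
    (W 1 false * W m.+3 true + W 1 true * W m.+3 false) * (Df (-1) * Kf (-1)).
Proof.
have KK x2 x3 : \prod_(j < M) \sum_(u : bool) \sum_(v : bool) @Hterm m _ w x2 x3 j (u, v)
   = Kf (if x2 (+) x3 then -1 else 1).
  by apply: eq_bigr => j _; rewrite Kj.
rewrite !big_bool !KK /Aterm /Df /=.
set K1 := Kf 1; set K2 := Kf (-1).
ring.
Qed.


Hypothesis hq : forall k, (k < n)%N -> n2 (W k false) + n2 (W k true) = 1.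

Lemma Kf_bound s : n2 s = 1 -> n2 (Kf s) <= 2 ^+ M.
Proof.
move=> hs; rewrite /Kf n2_prod -[X in _ <= X ^+ _]mulr1 -[in X in _ <= X](card_ord M) -prodr_const.
apply: ler_prod => j _; rewrite n2_ge0 /=.
have hj := ltn_ord j.

apply: (le_trans (CS2 R _ _ _ _)).
by rewrite n2M hs mul1r para !hq; try lia; rewrite mul1r.
Qed.

Lemma T_bound :
  n2 ((W 1 false * W m.+3 false + W 1 true * W m.+3 true) * (Df 1 * Kf 1) +
      (W 1 false * W m.+3 true + W 1 true * W m.+3 false) * (Df (-1) * Kf (-1)))
  <= 4 * 2 ^+ M.
Proof.
apply: (le_trans (CS2 R _ _ _ _)).
have h1 : (1 < n)%N by lia.
have h3 : (m.+3 < n)%N by lia.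
have hP1 := CS2 R (W 1 false) (W 1 true) (W m.+3 false) (W m.+3 true).
have hP2 := CS2 R (W 1 false) (W 1 true) (W m.+3 true) (W m.+3 false).
rewrite (hq 1 h1) (addrC (n2 (W m.+3 true))) (hq m.+3 h3) mul1r in hP1 hP2.
have hK1 : n2 (Kf 1) <= 2 ^+ M by apply: Kf_bound; rewrite n2_1.
have hK2 : n2 (Kf (-1)) <= 2 ^+ M by apply: Kf_bound; rewrite n2N n2_1.
have hD : n2 (Df 1) + n2 (Df (-1)) = 2.
  by rewrite /Df mulr1 mulrN1 para hq ?mulr1 //; lia.
rewrite !n2M.
set p1 := n2 (_ + _) in hP1 *; set p2 := n2 (_ + _) in hP2 *.
set d1 := n2 (Df 1) in hD *; set d2 := n2 (Df (-1)) in hD *.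
set k1 := n2 (Kf 1) in hK1 *; set k2 := n2 (Kf (-1)) in hK2 *.
set P := 2 ^+ M in hK1 hK2 *.
have p1g : 0 <= p1 by apply: n2_ge0.
have p2g : 0 <= p2 by apply: n2_ge0.
have d1g : 0 <= d1 by apply: n2_ge0.
have d2g : 0 <= d2 by apply: n2_ge0.
have k1g : 0 <= k1 by apply: n2_ge0.
have k2g : 0 <= k2 by apply: n2_ge0.
have e1 : d1 * k1 <= d1 * P by apply: ler_wpM2l.
have e2 : d2 * k2 <= d2 * P by apply: ler_wpM2l.


have e0 : d1 * P + d2 * P = 2 * P by rewrite -mulrDl hD.
have e3 : d1 * k1 + d2 * k2 <= 2 * P by lra.
have e4 : 0 <= d1 * k1 + d2 * k2 by apply: addr_ge0; apply: mulr_ge0.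
have e5 : (p1 + p2) * (d1 * k1 + d2 * k2) <= 2 * (d1 * k1 + d2 * k2).
  by apply: ler_wpM2r => //; lra.
have e6 : 2 * (d1 * k1 + d2 * k2) <= 2 * (2 * P) by apply: ler_wpM2l => //.
lra.
Qed.
End Main.



Section Final.
Variable R : realType.
Variable m : nat.
Local Notation N := m.+2.
Local Notation n := ((m.+2).*2).+1.
Local Notation M := m.+1.
Local Notation C := (R[i]).

Definition wphi (phi : 'I_n -> C * C) (i : 'I_n) (b : bool) : C :=
  if b then ((phi i).2)^* else ((phi i).1)^*.

Definition Sphi (phi : 'I_n -> C * C) : C :=
  \sum_(q : basis n) (prod_vec phi q)^* * h_state R q.

Definition rr : R := (2 ^+ N * Num.sqrt 2)^-1.

Definition Tphi (phi : 'I_n -> C * C) : C :=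
  let w := wphi phi in
  (w (inord 1) false * w (inord m.+3) false + w (inord 1) true * w (inord m.+3) true) *
     (@Df R m w 1 * @Kf R m w 1) +
  (w (inord 1) false * w (inord m.+3) true + w (inord 1) true * w (inord m.+3) false) *
     (@Df R m w (-1) * @Kf R m w (-1)).

Lemma S_eq phi : Sphi phi = Complex rr 0 * Tphi phi.
Proof.
rewrite /Tphi -T_closed -decomp /Sphi mulr_sumr; apply: eq_bigr => q _.
rewrite /h_state /prod_vec rmorph_prod.
rewrite (eq_bigr (fun i => wphi phi i (q i))); last by move=> i _; rewrite /wphi; case: (q i).
by rewrite mulrCA.
Qed.


Lemma expect_eq phi :
  complex.Re (expect (proj (@h_state R N)) (prod_vec phi)) = n2 (Sphi phi).
Proof.
rewrite -Re_normsq; congr complex.Re.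
rewrite /expect /Sphi rmorph_sum mulr_suml; apply: eq_bigr => q _.
rewrite mulr_sumr; apply: eq_bigr => q' _.
rewrite /proj rmorphM /= conjCK.
move: (prod_vec phi q) (h_state R q) (prod_vec phi q') (h_state R q') => a b c d.
by rewrite -!mulrA; congr (_ * (_ * _)); rewrite mulrC.
Qed.

Lemma r2_id : rr ^+ 2 * (4 * 2 ^+ M) = (2 ^+ N)^-1.
Proof.
rewrite /rr exprVn exprMn sqr_sqrtr ?ler0n // !exprS expr0 !mulr1.
have h : (2 ^+ m : R) != 0 by rewrite expf_neq0 // pnatr_eq0.
by field.
Qed.

Lemma n2_rr z : n2 (Complex rr 0 * z) = rr ^+ 2 * n2 z.
Proof. by rewrite n2M /n2 /= expr0n /= addr0. Qed.

Lemma upper phi : (forall i, qubit_state (phi i)) -> n2 (Sphi phi) <= (2 ^+ N)^-1.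
Proof.
move=> hphi; rewrite S_eq n2_rr -r2_id.
apply: ler_wpM2l; first exact: sqr_ge0.
apply: T_bound => k hk.
by rewrite /wphi /= !n2_conj qs_n2.
Qed.
End Final.



Section Lower.
Variable R : realType.
Variable m : nat.
Local Notation N := m.+2.
Local Notation n := ((m.+2).*2).+1.
Local Notation M := m.+1.
Local Notation C := (R[i]).

Definition hh : R := (Num.sqrt 2)^-1.
Definition inA (k : nat) : bool := (k == 0%N) || ((2 <= k)%N && (k < m.+3)%N).
Definition phi0 (i : 'I_n) : C * C :=
  if inA i then (1, 0) else (Complex hh 0, Complex hh 0).

Lemma hh2 : hh ^+ 2 = 2^-1.
Proof. by rewrite /hh exprVn sqr_sqrtr // ler0n. Qed.

Lemma phi0_qs i : qubit_state (phi0 i).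
Proof.
rewrite /qubit_state /phi0; case: (inA i) => /=.
  by rewrite normr1 normr0 expr1n expr0n addr0.
rewrite -add_Re2_Im2 /= expr0n addr0 -rmorphD hh2.
rewrite half2.
done.
Qed.

Local Notation y := ((Complex hh 0)^* : C).

Lemma w0A k b : (k < n)%N -> inA k -> @wphi R m phi0 (inord k) b = if b then 0 else 1.
Proof.
move=> hk hc; rewrite /wphi /phi0 inordK // hc.
by case: b => /=; [exact: conjC0 | exact: conjC1].
Qed.

Lemma w0B k b : (k < n)%N -> ~~ inA k -> @wphi R m phi0 (inord k) b = y.
Proof.
move=> hk hc; rewrite /wphi /phi0 inordK // (negbTE hc).
by case: b.
Qed.

Lemma Kc s : @Kf R m (@wphi R m phi0) s = (y + y) ^+ M.
Proof.
rewrite /Kf (eq_bigr (fun=> y + y)) ?prodr_const ?card_ord //.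
move=> j _; have hj := ltn_ord j.
rewrite (w0A (j + 2)) ?(w0A (j + 2)) ?(w0B (j + m.+4)) ?(w0B (j + m.+4)) /inA; try lia.
by rewrite mul1r mul0r addr0.
Qed.

Lemma lower : n2 (@Sphi R m phi0) = (2 ^+ N)^-1.
Proof.
rewrite S_eq n2_rr -r2_id; congr (_ * _).
rewrite /Tphi /Df !Kc.
rewrite (w0A 0) ?(w0A 0) ?(w0B 1) ?(w0B 1) ?(w0B m.+3) ?(w0B m.+3) /inA; try lia.
rewrite gen_id n2M n2X !n2_dbl n2M n2_conj /n2 /= expr0n addr0 hh2.
have -> : (4 / 2 : R) = 2 by field.
congr (_ * _); by field.
Qed.
End Lower.



Lemma Lambda2_val (R : realType) (m : nat) :
  Lambda2 (proj (@h_state R m.+2)) = (2 ^+ m.+2)^-1.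
Proof.
rewrite /Lambda2.
match goal with |- sup ?X = _ => set E := X end.
have ub : ubound E (2 ^+ m.+2)^-1.
  by move=> x [phi [hphi ->]]; rewrite expect_eq; exact: upper.
have inE : E (2 ^+ m.+2)^-1.
  exists (@phi0 R m); split; first exact: phi0_qs.
  by rewrite expect_eq lower.
apply/eqP; rewrite eq_le; apply/andP; split.
  by apply: ge_sup => //; exists (2 ^+ m.+2)^-1.
by apply: (ub_le_sup (ex_intro _ _ ub)).
Qed.

Theorem proposition1 (R : realType) (N : nat) :
  (2 <= N)%N -> GME (proj (@h_state R N)) = N%:R.
Proof.
case: N => [|[|m]] // _.
rewrite /GME Lambda2_val /log2.
set s := Num.sqrt _.
have sp : 0 < s by rewrite sqrtr_gt0 invr_gt0 exprn_gt0.
have s2 : s ^+ 2 = (2 ^+ m.+2)^-1 by rewrite sqr_sqrtr // invr_ge0 exprn_ge0.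
have l2 : 0 < ln (2 : R) by apply: ln_gt0; rewrite ltr1n.
have e1 : ln (s ^+ 2) = ln s *+ 2 by rewrite lnXn.
have e2 : ln (s ^+ 2) = - (ln (2 : R) *+ m.+2).
  rewrite s2 lnV ?lnXn //; rewrite posrE exprn_gt0 //.
have e3' : ln s * 2 = - (ln (2 : R) * m.+2%:R) by rewrite !mulr_natr -e1 e2.
have e3 : ln s = - (ln (2 : R) * m.+2%:R) / 2 by rewrite -e3'; field.
rewrite e3; field.
by rewrite lt0r_neq0.
Qed.
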